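(* If the vertex set of a graph $G$ has a partition into bisimplices, then $G$ is well-bicovered.
   Context: All graphs are finite and simple; ''subgraph'' means induced subgraph. A vertex is simplicial if its neighborhood induces a complete graph. A bisimplex of $G$ is a maximal clique $S$ of $G$ that contains a simplicial vertex $s$ (so $s$ has no neighbor outside $S$) and a second vertex $t\in S$ that has at most one neighbor outside $S$. A graph is well-bicovered if every vertex-inclusion-maximal induced bipartite subgraph has the same order. *)

(* Defs.v *)
From mathcomp Require Import all_boot.
Set Implicit Arguments. Unset Strict Implicit. Unset Printing Implicit Defensive.

(* A finite simple graph: vertex type T : finType, adjacency e : rel T
   that is symmetric and irreflexive (stated as hypotheses in the theorem). *)

Section Graphs.
Variables (T : finType) (e : rel T).

Definition is_clique (S : {set T}) : bool :=
  [forall x in S, forall y in S, (x != y) ==> e x y].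

Definition is_maximal_clique (S : {set T}) : bool :=
  is_clique S && [forall S' : {set T}, (S \proper S') ==> ~~ is_clique S'].

Definition nbhd (v : T) : {set T} := [set u | e v u].

Definition simplicial (v : T) : bool := is_clique (nbhd v).

Definition bisimplex (S : {set T}) : bool :=
  is_maximal_clique S &&
  [exists s in S, simplicial s &&
     [exists t in S, (t != s) && (#|nbhd t :\: S| <= 1)]].

Definition independent (X : {set T}) : bool :=
  [forall x in X, forall y in X, ~~ e x y].

Definition induces_bipartite (B : {set T}) : bool :=
  [exists X : {set T}, (X \subset B) && independent X && independent (B :\: X)].

Definition maximal_bipartite (B : {set T}) : bool :=
  induces_bipartite B &&
  [forall B' : {set T}, (B \proper B') ==> ~~ induces_bipartite B'].

Definition well_bicovered : Prop :=
  forall B1 B2 : {set T}, maximal_bipartite B1 -> maximal_bipartite B2 ->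
    #|B1| = #|B2|.

End Graphs.

(* Main.v *)
Require Import Defs.
From mathcomp Require Import all_boot.
Set Implicit Arguments. Unset Strict Implicit. Unset Printing Implicit Defensive.

Section Aux.
Variables (T : finType) (e : rel T).
Hypothesis e_sym : symmetric e.
Hypothesis e_irr : irreflexive e.

Definition split_ok (B X : {set T}) :=
  [&& X \subset B, independent e X & independent e (B :\: X)].

Lemma disjointP (A B : {set T}) :
  reflect (forall x, x \in A -> x \in B -> False) [disjoint A & B].
Proof.
rewrite disjoints_subset; apply: (iffP subsetP) => [H x xA xB | H x xA].
  by move: (H x xA); rewrite inE xB.
by rewrite inE; apply/negP => /(H x xA).
Qed.

Lemma disjointPn (A B : {set T}) :
  ~~ [disjoint A & B] -> exists2 x, x \in A & x \in B.
Proof.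
rewrite disjoints_subset => /subsetPn[x xA]; rewrite inE negbK => xB.
by exists x.
Qed.

Lemma le1_eq (A : {set T}) x y : #|A| <= 1 -> x \in A -> y \in A -> x = y.
Proof. by move/card_le1_eqP => H xA yA; rewrite (H x y xA yA). Qed.

Lemma indepP (X : {set T}) :
  reflect (forall x y, x \in X -> y \in X -> ~~ e x y) (independent e X).
Proof.
apply: (iffP forallP) => [H x y xX yX | H x].
  by move: (H x); rewrite xX /= => /forallP /(_ y); rewrite yX.
by apply/implyP => xX; apply/forallP => y; apply/implyP => yX; apply: H.
Qed.

Lemma cliqueP (S : {set T}) :
  reflect (forall x y, x \in S -> y \in S -> x != y -> e x y) (is_clique e S).
Proof.
apply: (iffP forallP) => [H x y xS yS nxy | H x].
  by move: (H x); rewrite xS /= => /forallP /(_ y); rewrite yS nxy.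
apply/implyP => xS; apply/forallP => y; apply/implyP => yS.
by apply/implyP; apply: H.
Qed.

Lemma bipP (B : {set T}) : reflect (exists X, split_ok B X) (induces_bipartite e B).
Proof. by apply: (iffP existsP) => -[X H]; exists X; move: H; rewrite /split_ok andbA. Qed.

Lemma split_swap B X : split_ok B X -> split_ok B (B :\: X).
Proof.
case/and3P => sXB iX iY; apply/and3P; split => //; first exact: subsetDl.
by rewrite setDDr setDv set0U; apply/indepP => x y /setIP[_ ?] /setIP[_ ?]; move/indepP: iX; apply.
Qed.

Lemma clique_indep_le1 S X : is_clique e S -> independent e X -> #|S :&: X| <= 1.
Proof.
move=> /cliqueP cS /indepP iX; apply/card_le1_eqP => x y /setIP[xS xX] /setIP[yS yX].
apply/eqP; apply: contraT => nxy.
by move: (iX x y xX yX); rewrite (cS x y) // eq_sym.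
Qed.

Lemma clique_bip_le2 S B : is_clique e S -> induces_bipartite e B -> #|S :&: B| <= 2.
Proof.
move=> cS /bipP[X /and3P[sXB iX iY]].
have -> : S :&: B = (S :&: X) :|: (S :&: (B :\: X)).
  apply/setP => x; rewrite !inE; case: (x \in S) => //=.
  by case xX: (x \in X); rewrite ?orbT //= (subsetP sXB).
apply: leq_trans (leq_card_setU _ _) _.
by rewrite -[2]/(1 + 1) leq_add // clique_indep_le1.
Qed.

Lemma add_vertex B X v : split_ok B X -> v \notin B ->
  [disjoint nbhd e v & X] -> induces_bipartite e (v |: B).
Proof.
case/and3P => sXB iX iY vB dis; apply/bipP; exists (v |: X); apply/and3P; split.
- by apply: setUS.
- apply/indepP => x y; rewrite !in_setU1 => /orP[/eqP->|xX] /orP[/eqP->|yX].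
  + by rewrite e_irr.
  + apply/negP => evy; move/disjointP: dis => /(_ y); rewrite inE evy => /(_ isT).
    by apply.
  + apply/negP; rewrite e_sym => evx; move/disjointP: dis => /(_ x); rewrite inE evx => /(_ isT).
    by apply.
  + by move/indepP: iX; apply.
- have -> : (v |: B) :\: (v |: X) = B :\: X.
    apply/setP => x; rewrite !inE; have [->|] := eqVneq x v => //=.
    by rewrite (negbTE vB) andbF.
  exact: iY.
Qed.

Lemma pick_split B Z : induces_bipartite e B -> #|Z :&: B| <= 1 ->
  exists X, split_ok B X && [disjoint Z & X].
Proof.
move=> /bipP[X sX] hZ.
have [dis|] := boolP [disjoint Z & X]; first by exists X; rewrite sX.
case/disjointPn => w wZ wX.
exists (B :\: X); rewrite split_swap //=.
apply/disjointP => x xZ /setDP[xB xX].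
case/and3P: sX => sXB _ _.
have wB : w \in B by apply: (subsetP sXB).
have : x = w by apply: (le1_eq hZ); rewrite inE ?xZ ?xB ?wZ ?wB.
by move=> exw; move: xX; rewrite exw wX.
Qed.

Lemma split_remove_isolated B X s : split_ok B X ->
  (forall y, y \in B -> ~~ e s y) -> split_ok B (X :\ s).
Proof.
case/and3P => sXB iX iY iso; apply/and3P; split.
- by apply: subset_trans sXB; apply: subsetDl.
- by apply/indepP => x y /setD1P[_ ?] /setD1P[_ ?]; move/indepP: iX; apply.
- apply/indepP => x y /setDP[xB]; rewrite in_setD1 negb_and negbK => hx
                 /setDP[yB]; rewrite in_setD1 negb_and negbK => hy.
  case/orP: hx => [/eqP->|xX]; first exact: iso.
  case/orP: hy => [/eqP->|yX]; first by rewrite e_sym; apply: iso.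
  by move/indepP: iY; apply; apply/setDP.
Qed.

Lemma simplicial_nbhd S s : is_maximal_clique e S -> s \in S -> simplicial e s ->
  nbhd e s \subset S.
Proof.
case/andP => cS /forallP mS sS /cliqueP cN; apply/subsetP => x xN.
apply: contraT => xS.
have : S \proper x |: S by rewrite properUr // sub1set.
move/implyP: (mS (x |: S)) => H /H; apply: contraNT => _.
apply/cliqueP => a b; rewrite !in_setU1.
have exs : e x s by rewrite e_sym; move: xN; rewrite inE.
have gen : forall y, y \in S -> y != x -> e x y.
  move=> y yS nyx; have [->|nys] := eqVneq y s; first exact: exs.
  apply: cN => //; last by rewrite eq_sym.
  by rewrite inE; move/cliqueP: cS; apply => //; rewrite eq_sym.
move=> /orP[/eqP->|aS] /orP[/eqP->|bS] nab.
- by rewrite eqxx in nab.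
- by apply: gen => //; rewrite eq_sym.
- by rewrite e_sym; apply: gen.
- by move/cliqueP: cS; apply.
Qed.

Lemma bisimplex_ge2 S B : bisimplex e S -> maximal_bipartite e B -> 2 <= #|S :&: B|.
Proof.
case/andP => mcS /existsP[s /andP[sS /andP[simp /existsP[t /andP[tS /andP[nts hN]]]]]].
case/andP => bB /forallP maxB.
rewrite leqNgt ltnS; apply/negP => hle.
have nsub := simplicial_nbhd mcS sS simp.
suff [v [vB bv]] : exists v, v \notin B /\ induces_bipartite e (v |: B).
  have pr : B \proper v |: B by rewrite properUr // sub1set.
  by move: (maxB (v |: B)); rewrite pr bv.
have [sB|sB] := boolP (s \in B).
- have iso : forall y, y \in B -> ~~ e s y.
    move=> y yB; apply: contraT; rewrite negbK => esy.
    have yS : y \in S by apply: (subsetP nsub); rewrite inE.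
    have : y = s by apply: (le1_eq hle); rewrite inE ?yS ?yB ?sS ?sB.
    by move=> eys; move: esy; rewrite eys e_irr.
  have tB : t \notin B.
    apply: contra nts => tB; apply/eqP.
    by apply: (le1_eq hle); rewrite inE ?tS ?tB ?sS ?sB.
  have [X /andP[sX dX]] := pick_split (Z := nbhd e t :\: S) bB
     (leq_trans (subset_leq_card (subsetIl _ _)) hN).
  exists t; split => //.
  apply: (add_vertex (split_remove_isolated sX iso) tB).
  apply/disjointP => x xN /setD1P[nxs xX].
  case/and3P: sX => sXB _ _.
  have xB : x \in B by apply: (subsetP sXB).
  have [xS|xS] := boolP (x \in S).
    have : x = s by apply: (le1_eq hle); rewrite inE ?xS ?xB ?sS ?sB.
    by move/eqP; rewrite (negbTE nxs).
  by move/disjointP: dX => /(_ x); apply => //; rewrite inE xS xN.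
- have [X /andP[sX dX]] := pick_split (Z := nbhd e s) bB
     (leq_trans (subset_leq_card (setSI _ nsub)) hle).
  by exists s; split => //; apply: (add_vertex sX sB).
Qed.

End Aux.

Theorem mainTheorem17 (T : finType) (e : rel T)
  (e_sym : symmetric e) (e_irr : irreflexive e)
  (P : {set {set T}})
  (hP : partition P [set: T])
  (hbis : forall S, S \in P -> bisimplex e S) :
  well_bicovered e.
Proof.
have key : forall B, maximal_bipartite e B -> #|B| = \sum_(A in P) 2.
  move=> B mB.
  have -> : #|B| = \sum_(x in [set: T] | x \in B) 1.
    by rewrite sum1_card; apply: eq_card => x; rewrite -[RHS]/((x \in [set: T]) && (x \in B)) in_setT.
  rewrite (set_partition_big_cond _ hP); apply: eq_bigr => A AP.
  rewrite sum1_card.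
  have -> : #|[pred x in A | x \in B]| = #|A :&: B|.
    by apply: eq_card => x; rewrite !inE.
  apply/eqP; rewrite eqn_leq (bisimplex_ge2 e_sym e_irr) ?hbis // andbT.
  apply: (@clique_bip_le2 _ e); last by case/andP: mB.
  by case/andP: (hbis A AP) => /andP[].
by move=> B1 B2 /key -> /key ->.
Qed.
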